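(* Let $2\le m\le n$. Then $\operatorname{diam}(Y^0_{n,m})=\operatorname{diam}(Y^1_{n,m})=\lfloor n(m+1)/2\rfloor$.
   Context: The Yoke graph $Y_{n,m}$ has vertices the tuples $v=(v_0,\dots,v_{m+1})$ with $v_0,v_{m+1}\in\mathbb{Z}_n$, $v_1,\dots,v_m\in\{0,1\}$, $\sum v_i\equiv0\pmod n$; $u\sim v$ iff there is $0\le i\le m$ with $u_j=v_j$ for $j\notin\{i,i+1\}$ and either ($u_i=v_i+1$, $u_{i+1}=v_{i+1}-1$) or ($u_i=v_i-1$, $u_{i+1}=v_{i+1}+1$), buckets mod $n$. A vertex is identified with $(v_0,\dots,v_m)\in\{0,\dots,n-1\}\times\{0,1\}^m$ (with $v_0$ its least non-negative representative). Equip this set with the dominance order: $(v_0,\dots,v_m)\trianglelefteq(u_0,\dots,u_m)$ iff $\sum_{j=0}^{i}v_j\le\sum_{j=0}^{i}u_j$ for all $0\le i\le m$. Let $\hat0=(0,\dots,0)$, $\hat1=(n-1,1,\dots,1)$, $u_0=(n-1,1,0,\dots,0)$, $u_1=(0,0,1,\dots,1)$; let $I_0=[\hat0,u_0]$ and $I_1=[u_1,\hat1]$ be intervals in this order, and let $Y^0_{n,m}$, $Y^1_{n,m}$ be the subgraphs of $Y_{n,m}$ induced by $I_0$ and $I_1$ respectively (distances measured within these subgraphs). *)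

(* Defs.v *)
From HB Require Import structures.
From mathcomp Require Import all_boot all_order all_algebra.
Set Implicit Arguments. Unset Strict Implicit. Unset Printing Implicit Defensive.
Import Order.TTheory GRing.Theory Num.Theory.
Local Open Scope ring_scope.

(* A vertex of the Yoke graph Y_{n,m} is identified with
   (v_0, v_1, ..., v_m) in {0..n-1} x {0,1}^m; the last bucket v_{m+1}
   is determined by v_0 + ... + v_{m+1} = 0 (mod n). *)
Definition yvert (n m : nat) := ('I_n * m.-tuple bool)%type.

Section Yoke.
Variables n m : nat.

Definition ylast (v : yvert n m) : nat :=
  ((n - ((v.1 : nat) + count id v.2) %% n) %% n)%N.

Definition yent (v : yvert n m) (j : nat) : int :=
  if j == 0%N then (v.1 : nat)%:Z
  else if (j <= m)%N then (nth false v.2 j.-1 : nat)%:Z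
  else (ylast v)%:Z.

Definition yeqat (j : nat) (x y d : int) : bool :=
  if (j == 0%N) || (j == m.+1) then (n%:Z %| x - (y + d))%Z
  else x == y + d.

Definition yadj (u v : yvert n m) : bool :=
  [exists i : 'I_m.+1,
     [forall j : 'I_m.+2, ((j : nat) != i) && ((j : nat) != i.+1) ==>
        (yent u j == yent v j)] &&
     ((yeqat i (yent u i) (yent v i) 1 &&
       yeqat i.+1 (yent u i.+1) (yent v i.+1) (-1)) ||
      (yeqat i (yent u i) (yent v i) (-1) &&
       yeqat i.+1 (yent u i.+1) (yent v i.+1) 1))].

Definition ycoords (v : yvert n m) : seq int := [seq yent v j | j <- iota 0 m.+1].

Definition psum (s : seq int) (i : nat) : int := \sum_(j < i.+1) nth 0 s j.
Definition dom (s t : seq int) : bool :=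
  all (fun i => psum s i <= psum t i) (iota 0 m.+1).

Definition yhat0 : seq int := nseq m.+1 0.
Definition yhat1 : seq int := (n.-1)%:Z :: nseq m 1.
Definition yu0 : seq int := (n.-1)%:Z :: 1 :: nseq m.-1 0.
Definition yu1 : seq int := 0 :: 0 :: nseq m.-1 1.

Definition yI0 : pred (yvert n m) :=
  fun v => dom yhat0 (ycoords v) && dom (ycoords v) yu0.
Definition yI1 : pred (yvert n m) :=
  fun v => dom yu1 (ycoords v) && dom (ycoords v) yhat1.

Definition walk_in (S : pred (yvert n m)) (x y : yvert n m) (k : nat) : Prop :=
  exists p : seq (yvert n m),
    [/\ size p = k, path yadj x p, last x p = y & all S (x :: p)].

(* diam of the induced subgraph on S equals D: every pair of vertices of S
   is at distance <= D within S (so the subgraph is connected), and some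
   pair is at distance >= D (no walk within S of length < D). *)
Definition induced_diam_eq (S : pred (yvert n m)) (D : nat) : Prop :=
  (forall x y, S x -> S y -> exists2 k, (k <= D)%N & walk_in S x y k) /\
  (exists x y, [/\ S x, S y & forall k, walk_in S x y k -> (D <= k)%N]).

End Yoke.

(* Main.v *)
Require Import Defs.
From mathcomp Require Import all_boot all_order all_algebra zify.
Import Order.TTheory GRing.Theory Num.Theory.
Set Implicit Arguments. Unset Strict Implicit. Unset Printing Implicit Defensive.

Section Generic.
Variables n m : nat.
Hypothesis hm : 2 <= m.
Hypothesis hmn : m <= n.

Definition gshape (g : nat -> nat) := g 0 < n /\ forall t, t < m -> g t.+1 = g t \/ g t.+1 = (g t).+1.
Definition inA (g : nat -> nat) := forall t, t <= m -> g t <= n.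
Definition onediff (f g : nat -> nat) := exists2 t, t <= m &
  ((f t = (g t).+1 \/ g t = (f t).+1) /\ forall s, s <= m -> s != t -> f s = g s).
Definition w0 (t : nat) := if t == 0 then n.-1 else n.
Definition Lsum (f g : nat -> nat) := \sum_(t < m.+1) ((f t - g t) + (g t - f t)).
Definition Psum (f : nat -> nat) := \sum_(t < m.+1) f t.
Definition dec (f : nat -> nat) t0 := fun s => if s == t0 then (f s).-1 else f s.

Lemma onediff_sym f g : onediff f g -> onediff g f.
Proof.
case=> t ht [h1 h2]; exists t => //; split; first by lia.
by move=> s hs hst; rewrite h2.
Qed.

Lemma Lsum_sym f g : Lsum f g = Lsum g f.
Proof. by apply: eq_bigr => i _; rewrite addnC. Qed.

Lemma Lsum_ext f f' g g' : (forall t, t <= m -> f t = f' t) -> (forall t, t <= m -> g t = g' t) ->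
  Lsum f g = Lsum f' g'.
Proof. move=> hf hg; apply: eq_bigr => i _; rewrite hf ?hg //; exact: ltn_ord i. Qed.

Lemma Psum_ext f f' : (forall t, t <= m -> f t = f' t) -> Psum f = Psum f'.
Proof. move=> hf; apply: eq_bigr => i _; rewrite hf //; exact: ltn_ord i. Qed.

Lemma onediff_ext f f' g g' : (forall t, t <= m -> f t = f' t) -> (forall t, t <= m -> g t = g' t) ->
  onediff f g -> onediff f' g'.
Proof.
move=> hf hg [t ht [h1 h2]]; exists t => //; split; first by rewrite -hf // -hg.
by move=> s hs hst; rewrite -hf // -hg // h2.
Qed.

Lemma up_ex f g : gshape f -> gshape g -> forall k t, t + k = m -> g t < f t ->
  exists t1, [/\ t <= t1 <= m, g t1 < f t1 & (t1 = m \/ f t1.+1 = f t1)].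
Proof.
move=> [_ hf] [_ hg]; elim=> [|k IH] t htk hlt.
  by exists t; split => //; [lia | left; lia].
have htm : t < m by lia.
case: (hf t htm) => e.
  by exists t; split => //; [lia | right].
have [t1 [h1 h2 h3]] : exists t1, [/\ t.+1 <= t1 <= m, g t1 < f t1 & (t1 = m \/ f t1.+1 = f t1)].
  apply: IH; first by lia.
  by case: (hg t htm); lia.
by exists t1; split => //; lia.
Qed.

Lemma down_ex f g : gshape f -> gshape g -> forall t, t <= m -> g t < f t -> (t = m \/ f t.+1 = f t) ->
  exists t0, [/\ t0 <= m, g t0 < f t0, (t0 = m \/ f t0.+1 = f t0) & (t0 = 0 \/ f t0 = (f t0.-1).+1)].
Proof.
move=> [_ hf] [_ hg]; elim=> [|t IH] ht hlt hup.
  by exists 0; split => //; left.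
have htm : t < m by lia.
case: (hf t htm) => e.
  apply: IH; first by lia.
    by case: (hg t htm); lia.
  by right; lia.
by exists t.+1; split => //; right.
Qed.

Lemma sum_pt (F G : nat -> nat) t0 : t0 <= m -> G t0 + 1 = F t0 ->
  (forall i, i <= m -> i != t0 -> G i = F i) ->
  \sum_(i < m.+1) G i + 1 = \sum_(i < m.+1) F i.
Proof.
move=> h e hr.
rewrite (bigD1 (Ordinal (h : t0 < m.+1))) //= [in RHS](bigD1 (Ordinal (h : t0 < m.+1))) //=.
rewrite (eq_bigr (fun i : 'I_m.+1 => F i)); first by rewrite -e addnAC.
move=> i hi; apply: hr; first exact: (ltn_ord i).
by apply: contra hi => /eqP ee; apply/eqP; apply: val_inj.
Qed.

Lemma descent f g : gshape f -> gshape g -> inA f -> (exists2 t, t <= m & g t < f t) ->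
  exists t0, [/\ t0 <= m, gshape (dec f t0), inA (dec f t0), onediff (dec f t0) f &
                Lsum (dec f t0) g + 1 = Lsum f g].
Proof.
move=> sf sg hA [t ht hlt].
have [t1 [h1 h2 h3]] := up_ex sf sg (subnKC ht) hlt.
have [t0 [h01 h02 h03 h04]] := down_ex sf sg (proj2 (andP h1)) h2 h3.
exists t0; split => //.
- case: sf => f0 fS; split.
    by rewrite /dec; case: eqP => _; lia.
  move=> s hs; rewrite /dec.
  case: (eqVneq s.+1 t0) => e1; case: (eqVneq s t0) => e2; try lia.
  + subst t0; case: h04 => //= h; lia.
  + subst t0; case: h03 => h; [lia | ].
    right; lia.
  + exact: fS.
- move=> s hs; rewrite /dec; case: eqP => _; have := hA s hs; lia.
- exists t0 => //; split; first by rewrite /dec eqxx; lia.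
  by move=> s _ /negbTE e; rewrite /dec e.
- rewrite /Lsum; apply: (@sum_pt (fun t => f t - g t + (g t - f t))
      (fun t => dec f t0 t - g t + (g t - dec f t0 t)) t0) => //=.
    by rewrite /dec eqxx; lia.
  by move=> i _ /negbTE e; rewrite /dec e.
Qed.


Lemma onediff_P f g : onediff f g -> Psum f = (Psum g).+1 \/ Psum g = (Psum f).+1.
Proof.
case=> t ht [[h1|h1] h2]; rewrite /Psum.
- left; have := @sum_pt f g t ht; rewrite h1 addn1 => H.
  have := H erefl (fun i hi hit => esym (h2 i hi hit)); lia.
- right; have := @sum_pt g f t ht; rewrite h1 addn1 => H.
  have := H erefl (fun i hi hit => h2 i hi hit); lia.
Qed.

Lemma Psum0 : Psum (fun _ => 0) = 0.
Proof. by rewrite /Psum big1. Qed.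

Lemma Psum_w0 : Psum w0 = (n * m.+1).-1.
Proof.
rewrite /Psum big_ord_recl /w0 /=.
rewrite (eq_bigr (fun _ => n)); last by move=> i _.
rewrite sum_nat_const card_ord mulnS; lia.
Qed.

Lemma Lsum_le f g : (forall t, t <= m -> g t <= f t) -> Lsum f g + Psum g = Psum f.
Proof.
move=> H; rewrite /Lsum /Psum -big_split; apply: eq_bigr => i _.
have := H i (ltn_ord i) => h; change (f i - g i + (g i - f i) + g i = f i); lia.
Qed.

Lemma lip f g z : gshape f -> gshape g -> z <= m -> f z = g z ->
  forall t, t <= m -> f t - g t + (g t - f t) <= (t - z) + (z - t).
Proof.
move=> [_ hf] [_ hg] hz e.
have fw : forall k, z + k <= m -> f (z + k) - g (z + k) + (g (z + k) - f (z + k)) <= k.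
  elim=> [|k IH] hk; first by rewrite addn0; lia.
  have hk' : z + k < m by lia.
  have := IH (ltnW hk'); rewrite addnS.
  by case: (hf _ hk'); case: (hg _ hk'); lia.
have bw : forall k, k <= z -> f (z - k) - g (z - k) + (g (z - k) - f (z - k)) <= k.
  elim=> [|k IH] hk; first by rewrite subn0; lia.
  have hk' : z - k.+1 < m by lia.
  have e1 : (z - k.+1).+1 = z - k by lia.
  have := IH (ltnW hk); move: (hf _ hk') (hg _ hk'); rewrite e1.
  lia.
move=> t ht; case: (leqP z t) => h.
  have := fw (t - z); rewrite subnKC //; first by lia.
have := bw (z - t); rewrite subKn //; first by lia.
by apply: ltnW.
Qed.

Lemma Lsum_half f g z : gshape f -> gshape g -> z <= m -> f z = g z -> 2 * Lsum f g <= m * m.+1.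
Proof.
move=> sf sg hz e.
have E : Lsum f g = \sum_(i < m.+1) (f (m - i) - g (m - i) + (g (m - i) - f (m - i))).
  rewrite /Lsum (reindex_inj rev_ord_inj) /=; apply: eq_bigr => i _.
  by rewrite subSS.
rewrite mul2n -addnn {2}E /Lsum -big_split /=.
have -> : m * m.+1 = \sum_(i < m.+1) m by rewrite sum_nat_const card_ord mulnC.
apply: leq_sum => i _.
have hi := ltn_ord i.
have := lip sf sg hz e (hi : i <= m).
have := lip sf sg hz e (leq_subr i m).
lia.
Qed.

Lemma sign_prop f g : gshape f -> gshape g -> (forall z, z <= m -> f z != g z) -> g 0 < f 0 ->
  forall t, t <= m -> g t < f t.
Proof.
move=> [_ hf] [_ hg] hne h0; elim=> [|t IH] ht //.
have htm : t < m by lia.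
have := IH (ltnW htm); have := hne _ ht.
by case: (hf _ htm); case: (hg _ htm); lia.
Qed.


Variable phi : yvert n m -> nat -> nat.
Variable I : pred (yvert n m).
Hypothesis phi_shape : forall v, gshape (phi v).
Hypothesis I_inA : forall v, I v <-> inA (phi v).
Hypothesis phi_surj : forall g, gshape g -> exists v, forall t, t <= m -> phi v t = g t.
Hypothesis phi_inj : forall u v, (forall t, t <= m -> phi u t = phi v t) -> u = v.
Hypothesis phi_adj : forall u v, onediff (phi u) (phi v) -> yadj u v.
Hypothesis phi_wrap : forall u v, (forall t, t <= m -> phi u t = 0) ->
  (forall t, t <= m -> phi v t = w0 t) -> yadj u v /\ yadj v u.
Hypothesis phi_adj_inv : forall u v, I u -> I v -> yadj u v ->
  onediff (phi u) (phi v) \/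
  ((forall t, t <= m -> phi u t = 0) /\ (forall t, t <= m -> phi v t = w0 t)) \/
  ((forall t, t <= m -> phi u t = w0 t) /\ (forall t, t <= m -> phi v t = 0)).

Lemma walk0 x : I x -> walk_in I x x 0.
Proof. by move=> hx; exists [::]; split => //=; rewrite andbT. Qed.

Lemma walk_cons x x' y k : I x -> yadj x x' -> walk_in I x' y k -> walk_in I x y k.+1.
Proof.
move=> hx hxx [p [hs hp hl ha]]; exists (x' :: p); split => //=.
- by rewrite hs.
- by rewrite hxx.
- by rewrite hx.
Qed.

Lemma walk_rcons x y' y k : walk_in I x y' k -> yadj y' y -> I y -> walk_in I x y k.+1.
Proof.
move=> [p [hs hp hl ha]] hyy hy; exists (rcons p y); split.
- by rewrite size_rcons hs.
- by rewrite rcons_path hp hl.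
- by rewrite last_rcons.
- by rewrite -rcons_cons all_rcons hy.
Qed.

Lemma walk_cat x y z k l : walk_in I x y k -> walk_in I y z l -> walk_in I x z (k + l).
Proof.
move=> [p [hs hp hl ha]] [q [hs' hp' hl' ha']]; exists (p ++ q); split.
- by rewrite size_cat hs hs'.
- by rewrite cat_path hp hl hp'.
- by rewrite last_cat hl.
- rewrite -cat_cons all_cat ha /=; by move: ha' => /= /andP [].
Qed.

Lemma vert_of g : gshape g -> inA g -> exists v, I v /\ forall t, t <= m -> phi v t = g t.
Proof.
move=> sg ag; have [v hv] := phi_surj sg; exists v; split => //.
by apply/I_inA => t ht; rewrite hv //; apply: ag.
Qed.

Lemma sum0_pt (F : nat -> nat) : \sum_(i < m.+1) F i = 0 -> forall t, t <= m -> F t = 0.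
Proof.
move=> H t ht; move: H; rewrite (bigD1 (Ordinal (ht : t < m.+1))) //=; lia.
Qed.

Lemma l1walk k : forall x y, I x -> I y -> Lsum (phi x) (phi y) = k -> walk_in I x y k.
Proof.
elim: k => [|k IH] x y hx hy hL.
  have -> : x = y; last exact: walk0.
  apply: phi_inj => t ht; have := @sum0_pt (fun t => phi x t - phi y t + (phi y t - phi x t)) hL t ht; lia.
have ax := proj1 (I_inA x) hx; have ay := proj1 (I_inA y) hy.
case: (boolP [exists t : 'I_m.+1, phi y t < phi x t]) => [/existsP [t ht]|hn].
  have [t0 [h0 s' a' od hL']] := descent (phi_shape x) (phi_shape y) ax
      (ex_intro2 _ _ (t : nat) (ltn_ord t : t <= m) ht).
  have [x' [hx' ex']] := vert_of s' a'.
  apply: (@walk_cons x x') => //.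
    apply: phi_adj; apply: onediff_sym; apply: onediff_ext od => // s hs; by rewrite ex'.
  apply: IH => //.
  have : Lsum (phi x') (phi y) = Lsum (dec (phi x) t0) (phi y).
    by apply: Lsum_ext => // s hs; rewrite ex'.
  lia.
have hle : forall t, t <= m -> phi x t <= phi y t.
  move=> t ht; move/existsPn: hn => /(_ (Ordinal (ht : t < m.+1))) /=; lia.
case: (boolP [exists t : 'I_m.+1, phi x t < phi y t]) => [/existsP [t ht]|hn2].
  have [t0 [h0 s' a' od hL']] := descent (phi_shape y) (phi_shape x) ay
      (ex_intro2 _ _ (t : nat) (ltn_ord t : t <= m) ht).
  have [y' [hy' ey']] := vert_of s' a'.
  apply: (@walk_rcons x y') => //; last first.
    apply: phi_adj; apply: onediff_ext od => // s hs; by rewrite ey'.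
  apply: IH => //.
  have : Lsum (phi x) (phi y') = Lsum (dec (phi y) t0) (phi x).
    by rewrite Lsum_sym; apply: Lsum_ext => // s hs; rewrite ey'.
  rewrite Lsum_sym in hL; lia.
exfalso.
have : Lsum (phi x) (phi y) = 0.
  rewrite /Lsum big1 // => i _.
  move/existsPn: hn2 => /(_ i); have := hle i (ltn_ord i); lia.
lia.
Qed.

Definition D := (n * m.+1) %/ 2.

Lemma gshape0 : gshape (fun _ => 0).
Proof. split; [lia | by move=> t _; left]. Qed.

Lemma shape_w0 : gshape w0.
Proof. split; first by rewrite /w0 /=; lia.
move=> t _; rewrite /w0 /=; case: t => [|t] /=; [right; lia | by left].
Qed.

Lemma inA0 : inA (fun _ => 0).
Proof. by move=> t _. Qed.

Lemma inA_w0 : inA w0.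
Proof. by move=> t _; rewrite /w0; case: (t == 0); lia. Qed.

Lemma upper x y : I x -> I y -> exists2 k, k <= D & walk_in I x y k.
Proof.
move=> hx hy.
have ax := proj1 (I_inA x) hx; have ay := proj1 (I_inA y) hy.
have [z [hz ez]] := vert_of gshape0 inA0.
have [w [hw ew]] := vert_of shape_w0 inA_w0.
have hN : m * m.+1 <= n * m.+1 by rewrite leq_mul2r hmn orbT.
have PN := Psum_w0.
case: (boolP [exists t : 'I_m.+1, phi x t == phi y t]) => [/existsP [t /eqP ht]|hn].
  have := Lsum_half (phi_shape x) (phi_shape y) (ltn_ord t : t <= m) ht.
  move=> h2; exists (Lsum (phi x) (phi y)); last exact: l1walk.
  rewrite /D; lia.
have hne : forall t, t <= m -> phi x t != phi y t.
  by move=> t ht; move/existsPn: hn => /(_ (Ordinal (ht : t < m.+1))).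
have wz : walk_in I w z 1 := walk_cons hw (proj2 (phi_wrap ez ew)) (walk0 hz).
have zw : walk_in I z w 1 := walk_cons hz (proj1 (phi_wrap ez ew)) (walk0 hw).
have Lw : forall f, gshape f -> inA f -> Lsum w0 f + Psum f = Psum w0.
  move=> f [f0 _] af; apply: Lsum_le => t ht; rewrite /w0; case: eqP => [->|_]; last exact: af.
  lia.
have Lz : forall f, Lsum f (fun _ => 0) = Psum f.
  move=> f; have := @Lsum_le f (fun _ => 0) (fun t _ => leq0n _); rewrite Psum0; lia.
case: (ltngtP (phi y 0) (phi x 0)) => h0; last by move: (hne 0 (leq0n _)); rewrite h0 eqxx.
- have all_lt := sign_prop (phi_shape x) (phi_shape y) hne h0.
  have E := @Lsum_le (phi x) (phi y) (fun t ht => ltnW (all_lt t ht)).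
  case: (leqP (2 * Lsum (phi x) (phi y)) (n * m.+1)) => hc.
    exists (Lsum (phi x) (phi y)); last exact: l1walk.
    rewrite /D; lia.
  have w1 := l1walk hx hw erefl.
  have w2 := l1walk hz hy erefl.
  have := walk_cat (walk_cat w1 wz) w2.
  set K := (_ + 1 + _) => wk; exists K => //.
  have e1 : Lsum (phi x) (phi w) = Lsum w0 (phi x).
    by rewrite Lsum_sym; apply: Lsum_ext => // t ht; rewrite ew.
  have e2 : Lsum (phi z) (phi y) = Psum (phi y).
    by rewrite Lsum_sym -Lz; apply: Lsum_ext => // t ht; rewrite ez.
  have := Lw _ (phi_shape x) ax.
  rewrite /K /D e1 e2; lia.
- have hne' : forall t, t <= m -> phi y t != phi x t by move=> t ht; rewrite eq_sym hne.
  have all_lt := sign_prop (phi_shape y) (phi_shape x) hne' h0.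
  have E := @Lsum_le (phi y) (phi x) (fun t ht => ltnW (all_lt t ht)).
  rewrite Lsum_sym in E.
  case: (leqP (2 * Lsum (phi x) (phi y)) (n * m.+1)) => hc.
    exists (Lsum (phi x) (phi y)); last exact: l1walk.
    rewrite /D; lia.
  have w1 := l1walk hx hz erefl.
  have w2 := l1walk hw hy erefl.
  have := walk_cat (walk_cat w1 zw) w2.
  set K := (_ + 1 + _) => wk; exists K => //.
  have e1 : Lsum (phi x) (phi z) = Psum (phi x).
    by rewrite -Lz; apply: Lsum_ext => // t ht; rewrite ez.
  have e2 : Lsum (phi w) (phi y) = Lsum w0 (phi y).
    by apply: Lsum_ext => // t ht; rewrite ew.
  have := Lw _ (phi_shape y) ay.
  rewrite /K /D e1 e2; lia.
Qed.


Lemma sum_ind k c : \sum_(t < k) (c <= t) = k - c.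
Proof.
elim: k => [|k IH]; first by rewrite big_ord0.
rewrite big_ord_recr /= IH; case: (leqP c k) => h; lia.
Qed.

Definition tg t := D %/ m.+1 + (m.+1 - D %% m.+1 <= t).

Lemma Psum_tg : Psum tg = D.
Proof.
rewrite /Psum /tg big_split /= sum_nat_const card_ord sum_ind.
have := ltn_pmod D (ltn0Sn m); have := divn_eq D m.+1; lia.
Qed.

Lemma DN : D < n * m.+1.
Proof. rewrite /D; have : 0 < n * m.+1 by rewrite muln_gt0; lia. lia. Qed.

Lemma shape_tg : gshape tg.
Proof.
have hr := ltn_pmod D (ltn0Sn m).
have hq : D %/ m.+1 < n by rewrite ltn_divLR // DN.
split; first by rewrite /tg; lia.
move=> t _; rewrite /tg; case: (leqP (m.+1 - D %% m.+1) t) => h1.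
  by left; have -> : (m.+1 - D %% m.+1 <= t.+1) by lia.
case: (leqP (m.+1 - D %% m.+1) t.+1) => h2; [right|left]; lia.
Qed.

Lemma inA_tg : inA tg.
Proof.
have hq : D %/ m.+1 < n by rewrite ltn_divLR // DN.
move=> t _; rewrite /tg; case: (_ <= t); lia.
Qed.

Lemma invariant x : (forall t, t <= m -> phi x t = 0) -> forall p, path (@yadj n m) x p -> all I (x :: p) ->
  Psum (phi (last x p)) <= size p \/ n * m.+1 <= Psum (phi (last x p)) + size p.
Proof.
move=> hx; elim/last_ind => [|p z IH].
  move=> _ _; left => /=; rewrite (Psum_ext hx) Psum0; lia.
rewrite rcons_path -rcons_cons all_rcons last_rcons size_rcons => /andP [hp hadj] /andP [hz ha].
have hl : I (last x p) by apply: (allP ha); apply: mem_last.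
have PN := Psum_w0.
have NN : 0 < n * m.+1 by rewrite muln_gt0; lia.
case: (phi_adj_inv hl hz hadj) => [od|[[h1 h2]|[h1 h2]]].
- have := IH hp ha; have := onediff_P od; lia.
- right; rewrite (Psum_ext h2); lia.
- left; rewrite (Psum_ext h2) Psum0; lia.
Qed.

Lemma lower : exists x y, [/\ I x, I y & forall k, walk_in I x y k -> D <= k].
Proof.
have [z [hz ez]] := vert_of gshape0 inA0.
have [y [hy ey]] := vert_of shape_tg inA_tg.
exists z, y; split => // k [p [hs hp hl ha]].
have := invariant ez hp ha; rewrite hl hs (Psum_ext ey) Psum_tg.
rewrite /D; lia.
Qed.

Theorem gen_diam : induced_diam_eq I D.
Proof.
split; first by move=> x y hx hy; exact: upper.
exact: lower.
Qed.

End Generic.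

Section Concrete.
Variables n m : nat.
Hypothesis hm : 2 <= m.
Hypothesis hmn : m <= n.

Local Notation V := (yvert n m).

Definition Fv (v : V) t := (v.1 : nat) + count id (take t v.2).
Definition wrapF (f g : nat -> nat) := f 0 = g 0 + n.-1 /\ forall t, 0 < t <= m -> f t = g t + n.

Lemma Fv0 (v : V) : Fv v 0 = v.1.
Proof. by rewrite /Fv take0 addn0. Qed.

Lemma FvS (v : V) t : t < m -> Fv v t.+1 = Fv v t + nth false v.2 t.
Proof.
move=> ht; rewrite /Fv (take_nth false) ?size_tuple // -cats1 count_cat /= addn0 addnA.
by case: (nth false v.2 t).
Qed.

Lemma Fvm (v : V) : Fv v m = v.1 + count id v.2.
Proof. by rewrite /Fv take_oversize // size_tuple. Qed.

Lemma v1lt (v : V) : (v.1 : nat) < n.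
Proof. exact: ltn_ord. Qed.

Lemma Fv_le (v : V) t : t <= m -> Fv v t <= v.1 + t.
Proof.
elim: t => [|t IH] ht; first by rewrite Fv0 addn0.
rewrite FvS //; have := IH (ltnW ht); case: (nth false v.2 t) => /=; lia.
Qed.

Lemma Fv_shape (v : V) : gshape n m (Fv v).
Proof.
split; first by rewrite Fv0; exact: v1lt.
by move=> t ht; rewrite FvS //; case: (nth false v.2 t) => /=; [right|left]; lia.
Qed.

Lemma yent0 (v : V) : yent v 0 = Posz v.1.
Proof. by []. Qed.

Lemma yentj (v : V) j : 0 < j <= m -> yent v j = (Posz (Fv v j) - Posz (Fv v j.-1))%R.
Proof.
move=> /andP [h1 h2]; rewrite /yent.
have -> : (j == 0) = false by lia.
rewrite h2; case: j h1 h2 => [|j] //= _ hj.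
rewrite FvS //; case: (nth false v.2 j) => /=; lia.
Qed.

Lemma yentl (v : V) : yent v m.+1 = Posz (ylast v).
Proof. by rewrite /yent /= ltnn. Qed.

Lemma ylastE (v : V) : ylast v = (n - Fv v m %% n) %% n.
Proof. by rewrite /ylast Fvm. Qed.

Lemma ylast_dvd (v : V) : exists k, ylast v + Fv v m = k * n.
Proof.
have n0 : 0 < n by lia.
rewrite ylastE; have := divn_eq (Fv v m) n; have := ltn_pmod (Fv v m) n0.
set q := Fv v m %/ n; set r := Fv v m %% n => hr e.
case: (posnP r) => hr0.
  by exists q; rewrite hr0 subn0 modnn e hr0; lia.
exists q.+1; rewrite modn_small; last by lia.
rewrite e mulSn; lia.
Qed.

Lemma yeqat_eq j (x y d : int) : x = (y + d)%R -> yeqat n m j x y d.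
Proof.
move=> h; rewrite /yeqat; case: ifP => _; last by rewrite h eqxx.
by rewrite h subrr dvdz0.
Qed.

Lemma yeqat_sym j (x y d : int) : yeqat n m j x y d = yeqat n m j y x (- d).
Proof.
rewrite /yeqat; case: ifP => _.
  apply/dvdzP/dvdzP => [[q hq]|[q hq]]; exists (- q)%R; rewrite mulNr -hq; lia.
by apply/eqP/eqP; lia.
Qed.

Lemma yadj_sym (u v : V) : yadj u v -> yadj v u.
Proof.
case/existsP => i /andP [/forallP H1 H2]; apply/existsP; exists i; apply/andP; split.
  apply/forallP => j; apply/implyP => hj; rewrite eq_sym; exact: (implyP (H1 j) hj).
by rewrite !(yeqat_sym i (yent v i)) !(yeqat_sym i.+1 (yent v i.+1)) !opprK orbC.
Qed.


Definition dd (u v : V) t : int := (Posz (Fv u t) - Posz (Fv v t))%R.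

Lemma dconst (u v : V) a b : a <= b -> b <= m -> (forall j, a < j <= b -> yent u j = yent v j) ->
  dd u v b = dd u v a.
Proof.
move=> hab hb H; elim: b hab hb H => [|b IH] hab hb H.
  by have -> : a = 0 by lia.
case: (ltngtP a b.+1) => h; last by rewrite h.
  have e := H b.+1 (ltac:(lia)).
  rewrite !yentj /= in e; try lia.
  have := IH (ltac:(lia)) (ltac:(lia)) (fun j hj => H j (ltac:(lia))).
  rewrite /dd; lia.
lia.
Qed.

Lemma adj_inv (u v : V) : yadj u v ->
  onediff m (Fv u) (Fv v) \/ wrapF (Fv u) (Fv v) \/ wrapF (Fv v) (Fv u).
Proof.
case/existsP => i /andP [/forallP H1 H2].
have Heq : forall j, j <= m.+1 -> j != i -> j != i.+1 -> yent u j = yent v j.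
  move=> j hj h1 h2; have := H1 (Ordinal (hj : j < m.+2)); rewrite /= h1 h2 /=.
  by move/eqP.
have [e he [Hi Hi1]] : exists2 e : int, (e = 1 \/ e = -1)%R &
    yeqat n m i (yent u i) (yent v i) e /\ yeqat n m i.+1 (yent u i.+1) (yent v i.+1) (- e).
  case/orP: H2 => /andP [a b]; [exists 1%R | exists (-1)%R]; rewrite ?opprK //; by [left|right].
have hi := ltn_ord i.
have u1 := v1lt u; have v1 := v1lt v.
case: (posnP i) => [i0|ipos].
-
  move: Hi Hi1; rewrite /yeqat i0 /=.
  have -> : (1 == m.+1) = false by lia.
  move=> /dvdzP [k hk] /eqP h1.
  have d1 : forall t, 0 < t <= m -> dd u v t = dd u v 1.
    move=> t ht; apply: dconst; try lia.
    move=> j hj; apply: Heq; rewrite ?i0; lia.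
  have e1 : dd u v 1 = (dd u v 0 - e)%R.
    rewrite !yentj /= in h1; try lia. rewrite /dd; lia.
  rewrite !yent0 in hk.
  have hk3 : (k = 0 \/ k = 1 \/ k = -1)%R by nia.
  have d0 : dd u v 0 = (Posz u.1 - Posz v.1)%R by rewrite /dd !Fv0.
  have f0u := Fv0 u; have f0v := Fv0 v.
  rewrite /dd in e1 d1 d0.
  case: hk3 => [k0|[k1|k1]]; subst k.
  + left; exists 0 => //; split.
      rewrite !Fv0; lia.
    move=> s hs s0; have := d1 s (ltac:(lia)); lia.
  + right; left; split; first by rewrite !Fv0; lia.
    move=> t ht; have := d1 t ht; rewrite /dd; lia.
  + right; right; split; first by rewrite !Fv0; lia.
    move=> t ht; have := d1 t ht; rewrite /dd; lia.
-
  move: Hi; rewrite /yeqat.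
  have -> : (i == 0 :> nat) = false by lia.
  have -> : (i == m.+1 :> nat) = false by lia.
  move=> /eqP hi'.
  have d00 : dd u v 0 = 0%R.
    have := Heq 0 (leq0n _) (ltac:(lia)) (ltac:(lia)); rewrite /dd !Fv0 !yent0; lia.
  have dz : forall t, t < i -> dd u v t = 0%R.
    move=> t ht; rewrite (@dconst u v 0 t) //; try lia.
    by move=> j hj; apply: Heq; lia.
  have di : dd u v i = e.
    rewrite !yentj in hi'; try lia.
    have := dz i.-1 (ltac:(lia)); rewrite /dd; lia.
  have dz2 : forall t, i < t <= m -> dd u v t = 0%R.
    move=> t ht; move: Hi1; rewrite /yeqat.
    have -> : (i.+1 == 0) = false by [].
    have -> : (i.+1 == m.+1) = false by lia.
    move=> /eqP h1.
    rewrite (@dconst u v i.+1 t); try lia.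
      rewrite !yentj /= in h1; try lia.
      move: di; rewrite /dd /=; lia.
    by move=> j hj; apply: Heq; lia.
  left; exists i; first by lia.
  split; first by move: di; rewrite /dd; lia.
  move=> s hs hsi; case: (ltngtP s i) => h.
  + by have := dz s h; rewrite /dd; lia.
  + by have := dz2 s (ltac:(lia)); rewrite /dd; lia.
  + by move: hsi; rewrite h eqxx.
Qed.


Lemma adj_of (u v : V) : onediff m (Fv u) (Fv v) -> yadj u v.
Proof.
case=> t ht [h1 h2].
apply/existsP; exists (Ordinal (ht : t < m.+1)); apply/andP; split.
- apply/forallP => j; apply/implyP => /andP [hj1 hj2] /=; apply/eqP.
  move: hj1 hj2 => /= hj1 hj2.
  have hj := ltn_ord j.
  case: (posnP j) => [j0|jpos].
    rewrite j0 !yent0 -!Fv0 h2 //; by rewrite -j0.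
  case: (leqP j m) => jm.
    rewrite !yentj; try lia.
    rewrite h2 // (h2 j.-1); lia.
  have jm1 : (j : nat) = m.+1 by lia.
  rewrite jm1 !yentl !ylastE h2 //; lia.
- rewrite /=.
  have key : forall e : int, (e = 1 \/ e = -1)%R -> Posz (Fv u t) = (Posz (Fv v t) + e)%R ->
      yeqat n m t (yent u t) (yent v t) e && yeqat n m t.+1 (yent u t.+1) (yent v t.+1) (- e).
    move=> e he hte; apply/andP; split.
      apply: yeqat_eq; case: (posnP t) => [t0|tpos].
        by move: hte; rewrite t0 !yent0 -!Fv0.
      rewrite !yentj; try lia.
      have := h2 t.-1 (ltac:(lia)) (ltac:(lia)); lia.
    case: (ltnP t m) => tm.
      apply: yeqat_eq; rewrite !yentj /=; try lia.
      have := h2 t.+1 (ltac:(lia)) (ltac:(lia)); lia.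
    have tm' : t = m by lia.
    rewrite /yeqat tm' eqxx orbT !yentl.
    have [ku hu] := ylast_dvd u; have [kv hv] := ylast_dvd v.
    apply/dvdzP; exists (Posz ku - Posz kv)%R; rewrite mulrBl.
    rewrite tm' in hte; lia.
  case: h1 => h1; apply/orP; [left; apply: (key 1%R) | right; apply: (key (-1)%R)]; lia.
Qed.

Lemma wrap_adj (u v : V) : wrapF (Fv u) (Fv v) -> yadj u v.
Proof.
case=> h0 hS.
apply/existsP; exists ord0; apply/andP; split.
- apply/forallP => j; apply/implyP => /andP [hj1 hj2] /=; apply/eqP.
  move: hj1 hj2 => /= hj1 hj2.
  have hj := ltn_ord j.
  case: (leqP j m) => jm.
    rewrite !yentj; try lia.
    rewrite (hS j) ?(hS j.-1); lia.
  have jm1 : (j : nat) = m.+1 by lia.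
  rewrite jm1 !yentl !ylastE hS ?modnDr //; lia.
- apply/orP; right; apply/andP; split.
    rewrite /yeqat /=; apply/dvdzP; exists 1%R; rewrite !yent0 mul1r.
    have := Fv0 u; have := Fv0 v; have := v1lt u; lia.
  apply: yeqat_eq; rewrite !yentj /=; try lia.
  have := hS 1 (ltac:(lia)); lia.
Qed.


Lemma Fv_surj g : gshape n m g -> exists v : V, forall t, t <= m -> Fv v t = g t.
Proof.
case=> g0 gS.
set s := [seq g i.+1 != g i | i <- iota 0 m].
have hs : size s == m by rewrite size_map size_iota.
exists (Ordinal g0, Tuple hs).
elim=> [|t IH] ht; first by rewrite Fv0.
rewrite FvS //= IH; last by lia.
rewrite /s (nth_map 0) ?size_iota // nth_iota //=.
by case: (gS t ht) => ->; rewrite ?eqxx ?addn0 //; rewrite (_ : (g t).+1 != g t) ?addn1 //; lia.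
Qed.

Lemma Fv_inj (u v : V) : (forall t, t <= m -> Fv u t = Fv v t) -> u = v.
Proof.
move=> H.
have e1 : u.1 = v.1 by apply: val_inj => /=; have := H 0 (leq0n _); rewrite !Fv0.
have e2 : u.2 = v.2.
  apply: val_inj; apply: (@eq_from_nth _ false); first by rewrite !size_tuple.
  move=> i; rewrite size_tuple => hi.
  have := H i.+1 hi; rewrite !FvS // H; last by lia.
  by case: (nth false u.2 i); case: (nth false v.2 i); lia.
by case: u v e1 e2 H => [a b] [c d] /= -> ->.
Qed.

Lemma nth_ycoords (v : V) j : j <= m -> nth 0%R (ycoords v) j = yent v j.
Proof. by move=> hj; rewrite /ycoords (nth_map 0) ?size_iota // nth_iota. Qed.

Lemma psumS s i : psum s i.+1 = (psum s i + nth 0%R s i.+1)%R.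
Proof. by rewrite /psum big_ord_recr. Qed.

Lemma psum0 s : psum s 0 = nth 0%R s 0.
Proof. by rewrite /psum big_ord1. Qed.

Lemma psum_yc (v : V) i : i <= m -> psum (ycoords v) i = Posz (Fv v i).
Proof.
elim: i => [|i IH] hi; first by rewrite psum0 nth_ycoords // yent0 Fv0.
rewrite psumS IH; last by lia.
rewrite nth_ycoords // yentj /=; lia.
Qed.

Lemma psum_hat0 i : psum (yhat0 m) i = 0%R.
Proof. by rewrite /psum big1 // => j _; rewrite /yhat0 nth_nseq; case: ifP. Qed.

Lemma psum_u0 i : psum (yu0 n m) i = Posz (if i == 0 then n.-1 else n).
Proof.
elim: i => [|i IH]; first by rewrite psum0.
rewrite psumS IH /yu0; case: i IH => [|i] IH /=; first by lia.
by rewrite nth_nseq; case: ifP => _; rewrite addr0.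
Qed.

Lemma psum_hat1 i : i <= m -> psum (yhat1 n m) i = Posz (n.-1 + i).
Proof.
elim: i => [|i IH] hi; first by rewrite psum0 addn0.
rewrite psumS IH; last by lia.
rewrite /yhat1 /= nth_nseq (_ : i < m) //; lia.
Qed.

Lemma psum_u1 i : i <= m -> psum (yu1 m) i = Posz i.-1.
Proof.
elim: i => [|i IH] hi; first by rewrite psum0.
rewrite psumS IH; last by lia.
rewrite /yu1; case: i IH hi => [|i] IH hi /=; first by [].
rewrite nth_nseq (_ : i < m.-1); lia.
Qed.

Lemma domP s t : reflect (forall i, i <= m -> (psum s i <= psum t i)%R) (dom m s t).
Proof.
apply: (iffP allP) => H i hi.
  by apply: H; rewrite mem_iota; lia.
by apply: H; move: hi; rewrite mem_iota; lia.
Qed.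

Lemma I0P (v : V) : yI0 v <-> inA n m (Fv v).
Proof.
split.
  case/andP => _ /domP H t ht; have := H t ht; rewrite psum_yc // psum_u0; case: ifP => _; lia.
move=> H; apply/andP; split; apply/domP => i hi; rewrite psum_yc //.
  by rewrite psum_hat0.
rewrite psum_u0; case: (posnP i) => [->|ip] /=.
  by rewrite Fv0; have := v1lt v; lia.
have := H i hi; lia.
Qed.

Definition phi1 (v : V) t := n.-1 + t - Fv v t.

Lemma Fv_le' (v : V) t : t <= m -> Fv v t <= n.-1 + t.
Proof. move=> ht; have := Fv_le v ht; have := v1lt v; lia. Qed.

Lemma I1P (v : V) : yI1 v <-> inA n m (phi1 v).
Proof.
split.
  case/andP => /domP H _ t ht; have := H t ht; rewrite psum_yc // psum_u1 // /phi1; lia.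
move=> H; apply/andP; split; apply/domP => i hi; rewrite psum_yc //.
  by rewrite psum_u1 //; have := H i hi; rewrite /phi1; lia.
by rewrite psum_hat1 //; have := Fv_le' v hi; lia.
Qed.


Lemma w0_0 : w0 n 0 = n.-1. Proof. by []. Qed.
Lemma w0_S t : 0 < t -> w0 n t = n. Proof. by case: t. Qed.

Lemma diam0 : induced_diam_eq (@yI0 n m) (D n m).
Proof.
apply: (@gen_diam n m hm hmn Fv).
- exact: Fv_shape.
- exact: I0P.
- exact: Fv_surj.
- exact: Fv_inj.
- exact: adj_of.
- move=> u v hu hv.
  have hw : yadj v u.
    apply: wrap_adj; split; first by rewrite hu // hv // /w0 /=; lia.
    move=> t ht; rewrite hu ?hv /w0; try lia.
    by have -> : (t == 0) = false by lia.
  by split => //; apply: yadj_sym.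
- move=> u v hu hv huv.
  have au := proj1 (I0P u) hu; have av := proj1 (I0P v) hv.
  have f0u := v1lt u; have f0v := v1lt v; have e0u := Fv0 u; have e0v := Fv0 v.
  case: (adj_inv huv) => [od|[[w1 w2]|[w1 w2]]]; [by left| right; right | right; left].
  + split => t ht; case: (posnP t) => [->|tp]; rewrite ?w0_0 ?w0_S //.
    * lia.
    * have := au t ht; have := w2 t (ltac:(lia)); lia.
    * lia.
    * have := au t ht; have := w2 t (ltac:(lia)); lia.
  + split => t ht; case: (posnP t) => [->|tp]; rewrite ?w0_0 ?w0_S //.
    * lia.
    * have := av t ht; have := w2 t (ltac:(lia)); lia.
    * lia.
    * have := av t ht; have := w2 t (ltac:(lia)); lia.
Qed.


Lemma gshape_bound g : gshape n m g -> forall t, t <= m -> g t <= n.-1 + t.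
Proof.
case=> g0 gS; elim=> [|t IH] ht; first by lia.
have := IH (ltac:(lia)); case: (gS t (ltac:(lia))); lia.
Qed.

Lemma phi1_shape (v : V) : gshape n m (phi1 v).
Proof.
split; first by rewrite /phi1 Fv0; lia.
move=> t ht; rewrite /phi1 FvS //; have := Fv_le' v (ltnW ht).
case: (nth false v.2 t) => /=; [left|right]; lia.
Qed.

Lemma phi1_surj g : gshape n m g -> exists v : V, forall t, t <= m -> phi1 v t = g t.
Proof.
move=> sg; have gb := gshape_bound sg; case: sg => g0 gS.
have sh : gshape n m (fun t => n.-1 + t - g t).
  split; first by lia.
  move=> t ht; have := gb t (ltnW ht); have := gb t.+1 ht; case: (gS t ht); [right|left]; lia.
have [v hv] := Fv_surj sh; exists v => t ht; rewrite /phi1 hv //; have := gb t ht; lia.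
Qed.

Lemma phi1_inj (u v : V) : (forall t, t <= m -> phi1 u t = phi1 v t) -> u = v.
Proof.
move=> H; apply: Fv_inj => t ht; have := H t ht; have := Fv_le' u ht; have := Fv_le' v ht.
rewrite /phi1; lia.
Qed.

Lemma od_phi1 (u v : V) : onediff m (phi1 u) (phi1 v) <-> onediff m (Fv u) (Fv v).
Proof.
split; case=> t ht [h1 h2]; exists t => //; have := Fv_le' u ht; have := Fv_le' v ht;
  move: h1; rewrite /phi1 => h1 b1 b2; split; try lia.
- move=> s hs hst; have := h2 s hs hst; have := Fv_le' u hs; have := Fv_le' v hs; rewrite /phi1; lia.
- move=> s hs hst; have := h2 s hs hst; lia.
Qed.

Lemma diam1 : induced_diam_eq (@yI1 n m) (D n m).
Proof.
apply: (@gen_diam n m hm hmn phi1).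
- exact: phi1_shape.
- exact: I1P.
- exact: phi1_surj.
- exact: phi1_inj.
- by move=> u v /od_phi1; apply: adj_of.
- move=> u v hu hv.
  have hw : yadj u v.
    apply: wrap_adj; split.
      have := hu 0 (leq0n _); have := hv 0 (leq0n _); rewrite w0_0 /phi1.
      have := Fv_le' u (leq0n m); have := Fv_le' v (leq0n m); lia.
    move=> t ht; have := hu t (ltac:(lia)); have := hv t (ltac:(lia)); rewrite w0_S; last by lia.
    have := Fv_le' u (ltac:(lia) : t <= m); have := Fv_le' v (ltac:(lia) : t <= m).
    rewrite /phi1; lia.
  by split => //; apply: yadj_sym.
- move=> u v hu hv huv.
  have au := proj1 (I1P u) hu; have av := proj1 (I1P v) hv.
  case: (adj_inv huv) => [od|[[w1 w2]|[w1 w2]]]; [by left; apply/od_phi1| right; left | right; right].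
  + split => t ht; have bu := Fv_le' u ht; have bv := Fv_le' v ht;
      case: (posnP t) => [e|tp]; rewrite ?e ?w0_0 ?w0_S //; rewrite /phi1.
    * have := av 0 (leq0n _); rewrite /phi1; move: bu bv; rewrite e; lia.
    * have := av t ht; have := w2 t (ltac:(lia)); rewrite /phi1; lia.
    * have := av 0 (leq0n _); rewrite /phi1; move: bu bv; rewrite e; lia.
    * have := av t ht; have := w2 t (ltac:(lia)); rewrite /phi1; lia.
  + split => t ht; have bu := Fv_le' u ht; have bv := Fv_le' v ht;
      case: (posnP t) => [e|tp]; rewrite ?e ?w0_0 ?w0_S //; rewrite /phi1.
    * have := au 0 (leq0n _); rewrite /phi1; move: bu bv; rewrite e; lia.
    * have := au t ht; have := w2 t (ltac:(lia)); rewrite /phi1; lia.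
    * have := au 0 (leq0n _); rewrite /phi1; move: bu bv; rewrite e; lia.
    * have := au t ht; have := w2 t (ltac:(lia)); rewrite /phi1; lia.
Qed.

End Concrete.

Theorem lemma5p14 (n m : nat) : (2 <= m)%N -> (m <= n)%N ->
  induced_diam_eq (@yI0 n m) ((n * m.+1) %/ 2) /\
  induced_diam_eq (@yI1 n m) ((n * m.+1) %/ 2).
Proof.
move=> hm hmn; split; [exact: (diam0 hm hmn) | exact: (diam1 hm hmn)].
Qed.
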